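(* For every integer $n\ge 0$, the path $P_{n+2}$ on $n+2$ vertices belongs to ${\bf Forb}(\Gamma_{\le n})$; that is, $\gamma(P_{n+2})=n+1$ and $\gamma(P_{n+2}\setminus v)<\gamma(P_{n+2})$ for every vertex $v$.
   Context: For a finite graph $G$ and indeterminates $X_G=\{x_u : u\in V(G)\}$, the generalized Laplacian matrix $L(G,X_G)$ is the $V(G)\times V(G)$ matrix over $\mathbb{Z}[X_G]$ with $(u,u)$-entry $x_u$ and $(u,v)$-entry $-m_{uv}$ for $u\ne v$, $m_{uv}$ being the number of edges between $u$ and $v$. The $i$-th critical ideal $I_i(G,X_G)$ is the ideal of $\mathbb{Z}[X_G]$ generated by all $i\times i$ minors of $L(G,X_G)$ (with $I_i=\langle1\rangle$ for $i<1$, $I_i=\langle 0\rangle$ for $i>|V(G)|$). The algebraic co-rank $\gamma(G)$ is the number of critical ideals of $G$ equal to $\langle 1\rangle$. $\Gamma_{\le k}$ is the set of simple connected graphs with $\gamma\le k$; ${\bf Forb}(\Gamma_{\le k})$ is the set of minimal (under induced subgraphs) simple connected graphs $G$ with $\gamma(G)\ge k+1$, equivalently the simple connected graphs $G$ with $\gamma(G)=k+1$ and $\gamma(G\setminus v)<\gamma(G)$ for all vertices $v$. *)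

(* Defs.v *)
From HB Require Import structures.
From mathcomp Require Import all_boot all_algebra.
From mathcomp Require Import mpoly.
From Stdlib Require Import ClassicalDescription.

Set Implicit Arguments.
Unset Strict Implicit.
Unset Printing Implicit Defensive.

Import GRing.Theory.
Local Open Scope ring_scope.

(* A finite graph on vertex set 'I_n is given by an adjacency relation
   (we only deal with simple graphs: m_uv = 1 if adj u v, 0 otherwise). *)

Definition simple_graph n (adj : rel 'I_n) : Prop :=
  ssrbool.irreflexive adj /\ ssrbool.symmetric adj.

Definition connected_graph n (adj : rel 'I_n) : Prop :=
  forall u v : 'I_n, connect adj u v.

Definition gen_laplacian n (adj : rel 'I_n) : 'M[{mpoly int[n]}]_n :=
  \matrix_(u, v) if u == v then 'X_u else - ((adj u v : nat)%:R).

(* I_i(G, X_G) = <1>: 1 lies in the ideal generated by all i x i minors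
   (minors indexed by injective row/column selections). *)
Definition crit_ideal_trivial n (adj : rel 'I_n) (i : nat) : Prop :=
  exists c : {ffun 'I_i -> 'I_n} -> {ffun 'I_i -> 'I_n} -> {mpoly int[n]},
    \sum_(f : {ffun 'I_i -> 'I_n} | injectiveb f)
      \sum_(g : {ffun 'I_i -> 'I_n} | injectiveb g)
        c f g * \det (mxsub f g (gen_laplacian adj)) = 1.

Definition crit_ideal_trivialb n (adj : rel 'I_n) (i : nat) : bool :=
  if excluded_middle_informative (crit_ideal_trivial adj i) then true else false.

(* algebraic co-rank: number of critical ideals I_1, ..., I_n equal to <1>. *)
Definition gamma n (adj : rel 'I_n) : nat :=
  #|[set i : 'I_n | crit_ideal_trivialb adj i.+1]|.

Definition del_vertex n (adj : rel 'I_n.+1) (v : 'I_n.+1) : rel 'I_n :=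
  fun i j => adj (lift v i) (lift v j).

Definition in_Forb k n (adj : rel 'I_n.+1) : Prop :=
  [/\ simple_graph adj, connected_graph adj,
      gamma adj = k.+1
    & forall v : 'I_n.+1, (gamma (del_vertex adj v) < gamma adj)%N].

Definition path_adj m : rel 'I_m :=
  fun i j => (i.+1 == j :> nat) || (j.+1 == i :> nat).

(* Main.v *)
Require Import Defs.
From HB Require Import structures.
From mathcomp Require Import all_boot all_algebra.
From mathcomp Require Import mpoly.
From mathcomp Require Import zify.
From Stdlib Require Import ClassicalDescription.
Set Implicit Arguments.
Unset Strict Implicit.
Unset Printing Implicit Defensive.
Import GRing.Theory.
Local Open Scope ring_scope.
Lemma det_rowsum0 k (A : 'M[int]_k.+1) : A *m (const_mx 1 : 'cV_k.+1) = 0 -> \det A = 0.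
Proof.
move=> H; have := congr1 (mulmx (\adj A)) H.
rewrite mulmxA mul_adj_mx mulmx0 mul_scalar_mx => /matrixP/(_ ord0 ord0).
by rewrite !mxE mulr1.
Qed.

Lemma key k (adj : rel 'I_k.+1) : ~ crit_ideal_trivial adj k.+1.
Proof.
case=> c Hc.
pose v : 'I_k.+1 -> int := fun u => ((\sum_(w | w != u) (adj u w : nat))%N)%:R.
have := congr1 (meval v) Hc; rewrite meval1 raddf_sum big1 ?(@oner_eq0 int) //.
move=> f /injectiveP injf; rewrite raddf_sum big1 // => g /injectiveP injg.
change (meval v (c f g * \det (mxsub f g (gen_laplacian adj))) = 0).
rewrite mevalM -det_map_mx det_rowsum0 ?mulr0 //.
apply/matrixP => i j; rewrite !mxE.
rewrite (eq_bigr (fun s => meval v (gen_laplacian adj (f i) (g s)))); last first.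
  by move=> s _; rewrite !mxE mulr1.
rewrite -(@reindex_inj _ _ _ _ g xpredT (fun s => meval v (gen_laplacian adj (f i) s))) //=.
rewrite (bigD1 (f i)) //= !mxE eqxx mevalXU /v.
rewrite natr_sum -big_split big1 //= => s ns.
by rewrite !mxE eq_sym (negbTE ns) mevalN mevalMn meval1 subrr.
Qed.
Lemma path_triv n i : (i <= n.+1)%N -> crit_ideal_trivial (@path_adj n.+2) i.
Proof.
move=> hi.
pose f0 : {ffun 'I_i -> 'I_n.+2} := [ffun r : 'I_i => inord r].
pose g0 : {ffun 'I_i -> 'I_n.+2} := [ffun r : 'I_i => inord r.+1].
have hlt1 (r : 'I_i) : (r < n.+2)%N by have := ltn_ord r; lia.
have hlt2 (r : 'I_i) : (r.+1 < n.+2)%N by have := ltn_ord r; lia.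
have if0 : injectiveb f0.
  apply/injectiveP => r s; rewrite !ffunE => E; apply/val_inj; have := congr1 (@nat_of_ord _) E; by rewrite !inordK.
have ig0 : injectiveb g0.
  apply/injectiveP => r s; rewrite !ffunE => E; apply/val_inj; have := congr1 (@nat_of_ord _) E; by rewrite !inordK // => -[].
exists (fun F G => if (F == f0) && (G == g0) then (-1) ^+ i else 0).
rewrite (bigD1 f0 if0) /= [X in _ + X]big1 ?addr0; last first.
  by move=> F /andP[_ /negbTE ->]; rewrite big1 // => G _; rewrite mul0r.
rewrite (bigD1 g0 ig0) /= [X in _ + X]big1 ?addr0; last first.
  by move=> G /andP[_ /negbTE ->]; rewrite andbF mul0r.
rewrite !eqxx /= det_trig.
  rewrite (eq_bigr (fun _ => -1)); last first.
    move=> r _; rewrite !mxE !ffunE -val_eqE /= !inordK // ?(hlt1 r) ?(hlt2 r) //.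
    by rewrite (ltn_eqF (ltnSn r)) /path_adj /= !inordK // eqxx.
  by rewrite prodr_const card_ord -exprMn mulrNN mulr1 expr1n.
apply/is_trig_mxP => r s rs; rewrite !mxE !ffunE -val_eqE /= !inordK //.
rewrite /path_adj /= !inordK // !eqSS.
have -> : (r == s.+1 :> nat) = false by apply/negbTE/eqP; lia.
have -> : (r == s :> nat) = false by apply/negbTE/eqP; lia.
have -> : (s.+2 == r :> nat) = false by apply/negbTE/eqP; lia.
by rewrite /= mulr0n oppr0.
Qed.
Lemma gamma_le k (adj : rel 'I_k.+1) : (gamma adj <= k)%N.
Proof.
rewrite /gamma.
apply: leq_trans (subset_leq_card (_ : _ \subset [set~ (@ord_max k)])) _.
  2: by rewrite cardsC1 card_ord.
apply/subsetP => i; rewrite !inE /crit_ideal_trivialb.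
case: excluded_middle_informative => // H _; apply/eqP => E; subst i.
exact: key H.
Qed.

Lemma gamma_path n : gamma (@path_adj n.+2) = n.+1.
Proof.
rewrite /gamma (_ : [set _ | _] = [set~ ord_max]) ?cardsC1 ?card_ord //.
apply/setP => i; rewrite !inE /crit_ideal_trivialb.
case: excluded_middle_informative => H; case: (i =P ord_max) => [E|ne] //.
  by subst i; case: (key H).
exfalso; apply: H; apply: path_triv.
have := ltn_ord i; have : nat_of_ord i <> n.+1 by move=> E; apply: ne; apply/val_inj.
lia.
Qed.

Lemma path_connect m (u v : 'I_m) : connect (@path_adj m) u v.
Proof.
have sym : connect_sym (@path_adj m).
  by apply: sym_connect_sym => i j; rewrite /path_adj orbC.
suff H : forall d (i j : 'I_m), (nat_of_ord j = i + d)%N -> connect (@path_adj m) i j.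
  case: (leqP u v) => uv; first by apply: (H (v - u)%N); lia.
  by rewrite sym; apply: (H (u - v)%N); lia.
elim=> [|d IH] i j E.
  by rewrite (_ : j = i) ?connect0 //; apply/val_inj; rewrite /= E addn0.
have lt : (i + d < m)%N by have := ltn_ord j; lia.
apply: connect_trans (IH i (Ordinal lt) erefl) _; apply: connect1.
by rewrite /path_adj /= E addnS eqxx.
Qed.

Theorem theorem5p1 (n : nat) : in_Forb n (@path_adj n.+2).
Proof.
split.
- split; first by move=> i; rewrite /path_adj; apply/negbTE/norP; split; apply/eqP; lia.
  by move=> i j; rewrite /path_adj orbC.
- by move=> u v; apply: path_connect.
- exact: gamma_path.
- by move=> v; rewrite gamma_path ltnS gamma_le.
Qed.
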